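(* Let $\mathcal{C}$ be a deflation-exact category and $\mathcal{A}$ an admissibly deflation-percolating subcategory. Consider a commutative diagram $$\begin{array}{ccccc} X&\rightarrowtail&Y&\twoheadrightarrow&Z\\ \downarrow{\scriptstyle f}&&\downarrow{\scriptstyle g}&&\|\\ X'&\rightarrowtail&Y'&\twoheadrightarrow&Z\end{array}$$ whose rows are conflations and whose right vertical map is the identity of $Z$. (1) If $f$ is an $\mathcal{A}^{-1}$-inflation, then $g$ is an $\mathcal{A}^{-1}$-inflation. (2) If $f$ is an $\mathcal{A}^{-1}$-deflation, then $g$ is an $\mathcal{A}^{-1}$-deflation.
   Context: A conflation category is an additive category with a class of kernel-cokernel pairs (closed under isomorphisms) called conflations; first map an inflation, second a deflation. A deflation-exact category is a conflation category satisfying: (R0) $1_0$ is a deflation; (R1) composites of deflations are deflations; (R2) pullbacks of deflations along arbitrary morphisms exist and are deflations. A non-empty full subcategory $\mathcal{A}$ is admissibly deflation-percolating if: (A1) for every conflation $A'\rightarrowtail A\twoheadrightarrow A''$, $A\in\mathcal{A}$ iff $A',A''\in\mathcal{A}$; (A2) every morphism $C\to A$ with $A\in\mathcal{A}$ factors as a deflation $C\twoheadrightarrow A'$ followed by an inflation $A'\rightarrowtail A$ with $A'\in\mathcal{A}$; (A3) if $a\colon C\rightarrowtail D$ is an inflation and $b\colon C\twoheadrightarrow A$ a deflation with $A\in\mathcal{A}$, the pushout of $a$ along $b$ exists and yields a deflation $D\twoheadrightarrow P$ and an inflation $A\rightarrowtail P$. An $\mathcal{A}^{-1}$-inflation is an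 inflation with cokernel in $\mathcal{A}$; an $\mathcal{A}^{-1}$-deflation is a deflation with kernel in $\mathcal{A}$. *)

(* Defs.v *)
From HB Require Import structures.
From mathcomp Require Import all_boot all_algebra.
Set Implicit Arguments. Unset Strict Implicit. Unset Printing Implicit Defensive.
Import GRing.Theory.
Local Open Scope ring_scope.

Record AddCat := {
  Obj :> Type;
  Mor : Obj -> Obj -> zmodType;
  mcomp : forall a b c : Obj, Mor b c -> Mor a b -> Mor a c;
  idm : forall a : Obj, Mor a a;
  compA : forall a b c d (h : Mor c d) (g : Mor b c) (f : Mor a b),
      mcomp h (mcomp g f) = mcomp (mcomp h g) f;
  comp1m : forall a b (f : Mor a b), mcomp (idm b) f = f;
  compm1 : forall a b (f : Mor a b), mcomp f (idm a) = f;
  compDl : forall a b c (g1 g2 : Mor b c) (f : Mor a b),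
      mcomp (g1 + g2) f = mcomp g1 f + mcomp g2 f;
  compDr : forall a b c (g : Mor b c) (f1 f2 : Mor a b),
      mcomp g (f1 + f2) = mcomp g f1 + mcomp g f2;
  has_zero : exists z : Obj, idm z = 0;
  has_biprod : forall a b : Obj, exists (c : Obj) (i1 : Mor a c) (i2 : Mor b c)
      (p1 : Mor c a) (p2 : Mor c b),
      [/\ mcomp p1 i1 = idm a, mcomp p2 i2 = idm b, mcomp p1 i2 = 0,
          mcomp p2 i1 = 0 & mcomp i1 p1 + mcomp i2 p2 = idm c]
}.
Arguments mcomp {a0 a b c} g f : rename.
Arguments idm {a0} a : rename.

Section CatNotions.
Variable C : AddCat.

Definition is_zero_obj (z : C) : Prop := idm z = 0.

Definition is_iso (a b : C) (f : Mor a b) : Prop :=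
  exists g : Mor b a, mcomp g f = idm a /\ mcomp f g = idm b.

Definition is_kernel (a b d : C) (f : Mor a b) (g : Mor b d) : Prop :=
  mcomp g f = 0 /\
  forall (e : C) (h : Mor e b), mcomp g h = 0 ->
    exists u : Mor e a, mcomp f u = h /\ forall u' : Mor e a, mcomp f u' = h -> u' = u.

Definition is_cokernel (a b d : C) (f : Mor a b) (g : Mor b d) : Prop :=
  mcomp g f = 0 /\
  forall (e : C) (h : Mor b e), mcomp h f = 0 ->
    exists u : Mor d e, mcomp u g = h /\ forall u' : Mor d e, mcomp u' g = h -> u' = u.

Definition is_kernel_cokernel_pair (a b d : C) (f : Mor a b) (g : Mor b d) : Prop :=
  is_kernel f g /\ is_cokernel f g.

(* pullback square:  P --t'--> B
                     |p'        |p
                     v          v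
                     C' --t--> D          *)
Definition is_pullback (b c' d P : C) (p : Mor b d) (t : Mor c' d)
    (t' : Mor P b) (p' : Mor P c') : Prop :=
  mcomp p t' = mcomp t p' /\
  forall (e : C) (x : Mor e b) (y : Mor e c'), mcomp p x = mcomp t y ->
    exists u : Mor e P, (mcomp t' u = x /\ mcomp p' u = y) /\
      forall u' : Mor e P, mcomp t' u' = x /\ mcomp p' u' = y -> u' = u.

(* pushout square:  c --a--> d
                    |b        |b'
                    v         v
                    A --a'--> P           *)
Definition is_pushout (c d A P : C) (a : Mor c d) (b : Mor c A)
    (b' : Mor d P) (a' : Mor A P) : Prop :=
  mcomp b' a = mcomp a' b /\
  forall (e : C) (x : Mor d e) (y : Mor A e), mcomp x a = mcomp y b ->
    exists u : Mor P e, (mcomp u b' = x /\ mcomp u a' = y) /\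
      forall u' : Mor P e, mcomp u' b' = x /\ mcomp u' a' = y -> u' = u.
End CatNotions.

Record ConfCat := {
  ccat :> AddCat;
  conf : forall a b c : ccat, Mor a b -> Mor b c -> Prop;
  conf_kc : forall a b c (f : Mor a b) (g : Mor b c),
      conf f g -> is_kernel_cokernel_pair f g;
  conf_iso : forall a b c a' b' c' (f : Mor a b) (g : Mor b c)
      (f' : Mor a' b') (g' : Mor b' c') (u : Mor a a') (v : Mor b b') (w : Mor c c'),
      is_iso u -> is_iso v -> is_iso w -> conf f g ->
      mcomp v f = mcomp f' u -> mcomp w g = mcomp g' v -> conf f' g'
}.

Section ConfNotions.
Variable C : ConfCat.

Definition inflation (a b : C) (f : Mor a b) : Prop :=
  exists (c : C) (g : Mor b c), conf f g.
Definition deflation (b c : C) (g : Mor b c) : Prop :=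
  exists (a : C) (f : Mor a b), conf f g.

Definition deflation_exact : Prop :=
  (forall z : C, is_zero_obj z -> deflation (idm z)) /\
  (forall a b c (f : Mor a b) (g : Mor b c),
              deflation f -> deflation g -> deflation (mcomp g f)) /\
  (forall b d c' (p : Mor b d) (t : Mor c' d), deflation p ->
              exists (P : C) (t' : Mor P b) (p' : Mor P c'),
                is_pullback p t t' p' /\ deflation p').

(* admissibly deflation-percolating full subcategory, given by its objects *)
Definition adm_defl_percolating (A : C -> Prop) : Prop :=
  (exists a : C, A a) /\
  (forall a b c (f : Mor a b) (g : Mor b c), conf f g ->
              (A b <-> A a /\ A c)) /\
  (forall (c a : C) (f : Mor c a), A a ->
              exists (a' : C) (d : Mor c a') (i : Mor a' a),
                [/\ A a', deflation d, inflation i & f = mcomp i d]) /\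
  (forall (c d a : C) (x : Mor c d) (y : Mor c a),
              inflation x -> deflation y -> A a ->
              exists (P : C) (y' : Mor d P) (x' : Mor a P),
                [/\ is_pushout x y y' x', deflation y' & inflation x']).

Definition Ainv_inflation (A : C -> Prop) (a b : C) (f : Mor a b) : Prop :=
  exists (c : C) (g : Mor b c), conf f g /\ A c.
Definition Ainv_deflation (A : C -> Prop) (b c : C) (g : Mor b c) : Prop :=
  exists (a : C) (f : Mor a b), conf f g /\ A a.
End ConfNotions.

(* Main.v *)
Require Import Defs.
From HB Require Import structures.
From mathcomp Require Import all_boot all_algebra.
Set Implicit Arguments. Unset Strict Implicit. Unset Printing Implicit Defensive.
Import GRing.Theory.
Local Open Scope ring_scope.
Local Notation compA := Defs.compA.
Local Notation comp1m := Defs.comp1m.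
Local Notation compm1 := Defs.compm1.
Local Notation compDl := Defs.compDl.
Local Notation compDr := Defs.compDr.

Lemma comp0m (C : AddCat) (a b c : C) (f : Mor a b) : mcomp (0 : Mor b c) f = 0.
Proof. apply: (addrI (mcomp (0 : Mor b c) f)); by rewrite -compDl !addr0. Qed.
Lemma compm0 (C : AddCat) (a b c : C) (g : Mor b c) : mcomp g (0 : Mor a b) = 0.
Proof. apply: (addrI (mcomp g (0 : Mor a b))); by rewrite -compDr !addr0. Qed.
Lemma compNl (C : AddCat) (a b c : C) (g : Mor b c) (f : Mor a b) : mcomp (- g) f = - mcomp g f.
Proof. apply: (addrI (mcomp g f)); by rewrite -compDl !subrr comp0m. Qed.
Lemma compNr (C : AddCat) (a b c : C) (g : Mor b c) (f : Mor a b) : mcomp g (- f) = - mcomp g f.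
Proof. apply: (addrI (mcomp g f)); by rewrite -compDr !subrr compm0. Qed.
Lemma compBl (C : AddCat) (a b c : C) (g1 g2 : Mor b c) (f : Mor a b) : mcomp (g1 - g2) f = mcomp g1 f - mcomp g2 f.
Proof. by rewrite compDl compNl. Qed.
Lemma compBr (C : AddCat) (a b c : C) (g : Mor b c) (f1 f2 : Mor a b) : mcomp g (f1 - f2) = mcomp g f1 - mcomp g f2.
Proof. by rewrite compDr compNr. Qed.

Lemma zero_tgt (C : AddCat) (a z : C) (m : Mor a z) : idm z = 0 -> m = 0.
Proof. by move=> hz; rewrite -[m]comp1m hz comp0m. Qed.
Lemma zero_src (C : AddCat) (a z : C) (m : Mor z a) : idm z = 0 -> m = 0.
Proof. by move=> hz; rewrite -[m]compm1 hz compm0. Qed.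

Lemma kernel_mono (C : AddCat) (a b d e : C) (f : Mor a b) (g : Mor b d) (u v : Mor e a) :
  is_kernel f g -> mcomp f u = mcomp f v -> u = v.
Proof.
case=> hgf hk huv.
have H : mcomp g (mcomp f u) = 0 by rewrite compA hgf comp0m.
have [w [_ hw]] := hk e _ H.
by rewrite (hw u erefl) (hw v (esym huv)).
Qed.
Lemma cokernel_epi (C : AddCat) (a b d e : C) (f : Mor a b) (g : Mor b d) (u v : Mor d e) :
  is_cokernel f g -> mcomp u g = mcomp v g -> u = v.
Proof.
case=> hgf hk huv.
have H : mcomp (mcomp u g) f = 0 by rewrite -compA hgf compm0.
have [w [_ hw]] := hk e _ H.
by rewrite (hw u erefl) (hw v (esym huv)).
Qed.

Lemma iso_id (C : AddCat) (a : C) : is_iso (idm a).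
Proof. by exists (idm a); rewrite comp1m. Qed.

Lemma conf_kernel (C : ConfCat) (a a' b d : C) (f : Mor a b) (f' : Mor a' b) (g : Mor b d) :
  conf f g -> is_kernel f' g -> conf f' g.
Proof.
move=> hc hk'.
have [[hk1 hk2] _] := conf_kc hc.
have [u [hu _]] := hk'.2 a f hk1.
have [u' [hu' _]] := hk2 a' f' hk'.1.
apply: (conf_iso (u := u) (v := idm b) (w := idm d) _ _ _ hc).
- exists u'; split.
  + apply: (kernel_mono (conj hk1 hk2)); by rewrite compA hu' hu compm1.
  + apply: (kernel_mono hk'); by rewrite compA hu hu' compm1.
- exact: iso_id.
- exact: iso_id.
- by rewrite comp1m hu.
- by rewrite comp1m compm1.
Qed.

Lemma conf_cokernel (C : ConfCat) (a b d d' : C) (f : Mor a b) (g : Mor b d) (g' : Mor b d') :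
  conf f g -> is_cokernel f g' -> conf f g'.
Proof.
move=> hc hk'.
have [_ [hk1 hk2]] := conf_kc hc.
have [w [hw _]] := hk2 d' g' hk'.1.
have [w' [hw' _]] := hk'.2 d g hk1.
apply: (conf_iso (u := idm a) (v := idm b) (w := w) _ _ _ hc).
- exact: iso_id.
- exact: iso_id.
- exists w'; split.
  + apply: (cokernel_epi (conj hk1 hk2)); by rewrite -compA hw hw' comp1m.
  + apply: (cokernel_epi hk'); by rewrite -compA hw' hw comp1m.
- by rewrite comp1m compm1.
- by rewrite compm1 hw.
Qed.

Lemma infl_mono (C : ConfCat) (a b e : C) (f : Mor a b) (u v : Mor e a) :
  inflation f -> mcomp f u = mcomp f v -> u = v.
Proof. move=> [c [g hc]]. have := conf_kc hc. rewrite /is_kernel_cokernel_pair => -[hk _]. exact: kernel_mono hk. Qed.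
Lemma defl_epi (C : ConfCat) (b c e : C) (g : Mor b c) (u v : Mor c e) :
  deflation g -> mcomp u g = mcomp v g -> u = v.
Proof. move=> [a [f hc]]. have := conf_kc hc. rewrite /is_kernel_cokernel_pair => -[_ hk]. exact: cokernel_epi hk. Qed.

Lemma pullback_defl (C : ConfCat) (hC : deflation_exact C) (b d c' P : C)
  (p : Mor b d) (t : Mor c' d) (t' : Mor P b) (p' : Mor P c') :
  is_pullback p t t' p' -> deflation p -> deflation p'.
Proof.
move=> [hsq hu] hp.
have [_ [_ R2]] := hC.
have [P2 [t2 [p2 [[hsq2 hu2] [a [k hk]]]]]] := R2 _ _ _ p t hp.
have [phi [[ph1 ph2] _]] := hu2 _ t' p' hsq.
have [psi [[ps1 ps2] _]] := hu _ t2 p2 hsq2.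
have e1 : mcomp phi psi = idm P2.
  have [w [_ hw]] := hu2 _ t2 p2 hsq2.
  rewrite (hw (idm P2)) ?compm1 // (hw (mcomp phi psi)) //.
  by rewrite !compA ph1 ph2.
have e2 : mcomp psi phi = idm P.
  have [w [_ hw]] := hu _ t' p' hsq.
  rewrite (hw (idm P)) ?compm1 // (hw (mcomp psi phi)) //.
  by rewrite !compA ps1 ps2.
exists a, (mcomp psi k).
apply: (conf_iso (u := idm a) (v := psi) (w := idm c') _ _ _ hk).
- exact: iso_id.
- by exists phi.
- exact: iso_id.
- by rewrite compm1.
- by rewrite comp1m ps2.
Qed.

Lemma mono_zero (C : AddCat) (a z : C) (m : Mor a z) :
  idm z = 0 -> (forall e (u v : Mor e a), mcomp m u = mcomp m v -> u = v) -> idm a = 0.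
Proof.
move=> hz hm; apply: hm; rewrite compm0; exact: zero_tgt.
Qed.

Lemma zeroA (C : ConfCat) (A : C -> Prop) : adm_defl_percolating A ->
  exists z : C, A z /\ idm z = 0.
Proof.
move=> [[a Aa] [_ [A2 _]]].
have [a' [d [i0 [Aa' hd hi e]]]] := A2 a a 0 Aa.
exists a'; split => //.
have hi0 : i0 = 0.
  apply: (defl_epi hd); by rewrite -e comp0m.
apply: (infl_mono hi); by rewrite hi0 !comp0m.
Qed.

Lemma defl_to_zero (C : ConfCat) (A : C -> Prop) : adm_defl_percolating A ->
  forall E : C, exists z : C, idm z = 0 /\ deflation (0 : Mor E z).
Proof.
move=> hA E.
have [z [Az hz]] := zeroA hA.
have [_ [_ [A2 _]]] := hA.
have [a' [d [i0 [Aa' hd hi e]]]] := A2 E z 0 Az.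
have ha' : idm a' = 0.
  apply: (infl_mono hi). by rewrite (zero_tgt (mcomp i0 (idm a')) hz) (zero_tgt (mcomp i0 0) hz).
exists a'; split => //.
by rewrite -(zero_tgt d ha').
Qed.

Lemma proj_defl (C : ConfCat) (hC : deflation_exact C) (A : C -> Prop) (hA : adm_defl_percolating A)
  (B W V : C) (e1 : Mor W B) (e2 : Mor V B) (p1 : Mor B W) (p2 : Mor B V) :
  mcomp p1 e1 = idm W -> mcomp p2 e2 = idm V -> mcomp p1 e2 = 0 -> mcomp p2 e1 = 0 ->
  mcomp e1 p1 + mcomp e2 p2 = idm B -> deflation p1.
Proof.
move=> h11 h22 h12 h21 hs.
have [z [hz hd]] := defl_to_zero hA V.
apply: (pullback_defl hC (p := 0 : Mor V z) (t := 0 : Mor W z) (t' := p2)) => //.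
split; first by rewrite !comp0m.
move=> E x y _.
exists (mcomp e2 x + mcomp e1 y); split.
  by rewrite !compDr !compA h22 h21 h12 h11 !comp0m !comp1m addr0 add0r.
move=> u' [<- <-].
by rewrite !compA addrC -compDl hs comp1m.
Qed.

Lemma conf_parts (C : ConfCat) (a b c : C) (f : Mor a b) (g : Mor b c) :
  conf f g -> is_kernel f g /\ is_cokernel f g.
Proof. by move/conf_kc. Qed.

Lemma diag_pushout (C : ConfCat) (hC : deflation_exact C)
  (X Y Z X' Y' : C)
  (i : Mor X Y) (p : Mor Y Z) (i' : Mor X' Y') (p' : Mor Y' Z)
  (f : Mor X X') (g : Mor Y Y')
  (hrow1 : conf i p) (hrow2 : conf i' p')
  (hsq1 : mcomp g i = mcomp i' f) (hsq2 : mcomp p' g = p) :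
  (forall E (x : Mor Y E) (y : Mor X' E), mcomp x i = mcomp y f ->
     exists u : Mor Y' E, mcomp u g = x /\ mcomp u i' = y) /\
  (forall E (u1 u2 : Mor Y' E), mcomp u1 g = mcomp u2 g -> mcomp u1 i' = mcomp u2 i' -> u1 = u2).
Proof.
have [hk1 hc1] := conf_parts hrow1.
have [hk2 hc2] := conf_parts hrow2.
have [_ [_ R2]] := hC.
have [Q [q2 [q1 [[hQ hQu] hq1]]]] := R2 _ _ _ p p' (ex_intro _ X (ex_intro _ i hrow1)).
have jm : forall E (e1 e2 : Mor E Q), mcomp q2 e1 = mcomp q2 e2 -> mcomp q1 e1 = mcomp q1 e2 -> e1 = e2.
  move=> E e1 e2 h2 h1.
  have hh : mcomp p (mcomp q2 e1) = mcomp p' (mcomp q1 e1) by rewrite !compA hQ.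
  have [w [_ hw]] := hQu E _ _ hh.
  by rewrite (hw e1) // (hw e2).
have Hs : mcomp p (idm Y) = mcomp p' g by rewrite compm1 hsq2.
have [s [[s2 s1] _]] := hQu Y _ _ Hs.
have Hj : mcomp p (0 : Mor X' Y) = mcomp p' i' by rewrite compm0 hk2.1.
have [j [[j2 j1] _]] := hQu X' _ _ Hj.
have jmono : forall E (u v : Mor E X'), mcomp j u = mcomp j v -> u = v.
  move=> E u v h; apply: (kernel_mono hk2); by rewrite -j1 -!compA h.
have [r hr] : exists r : Mor Q X', mcomp j r = idm Q - mcomp s q2.
  have h0 : mcomp p' (mcomp q1 (idm Q - mcomp s q2)) = 0.
    by rewrite compA -hQ -compA compBr compm1 compA s2 comp1m subrr compm0.
  have [w [hw _]] := hk2.2 _ _ h0.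
  exists w; apply: jm.
    by rewrite compA j2 comp0m compBr compm1 compA s2 comp1m subrr.
  by rewrite compA j1 hw.
have rj : mcomp r j = idm X'.
  apply: jmono; by rewrite compA hr compBl comp1m -compA j2 compm0 subr0 compm1.
have rs : mcomp r s = 0.
  apply: jmono; by rewrite compA hr compBl comp1m -compA s2 compm1 subrr compm0.
have q1E : q1 = mcomp i' r + mcomp g q2.
  by rewrite -j1 -s1 -!compA -compDr hr subrK compm1.
have [Ka [a ha]] := hq1.
have [hka hca] := conf_parts ha.
split; last first.
  move=> E u1 u2 e1 e2; apply: (defl_epi hq1).
  by rewrite q1E !compDr !compA e1 e2.
move=> E x y hxy.
set t := mcomp y r + mcomp x q2.
have ta : mcomp t a = 0.
  have h0 : mcomp p (mcomp q2 a) = 0 by rewrite compA hQ -compA hka.1 compm0.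
  have [w [hw _]] := hk1.2 _ _ h0.
  have ea : a - mcomp s (mcomp i w) = mcomp j (- mcomp f w).
    apply: jm.
      by rewrite compBr !compA s2 j2 comp1m comp0m hw subrr.
    by rewrite compBr !compA s1 j1 hka.1 hsq1 sub0r compNr compA.
  have ra : mcomp r a = - mcomp f w.
    apply: jmono; by rewrite compA hr compBl comp1m -compA -hw ea.
  by rewrite /t compDl -!compA ra -hw compNr !compA hxy addNr.
have [u [hu _]] := hca.2 _ _ ta.
exists u; split.
  by rewrite -s1 compA hu /t compDl -!compA rs s2 compm0 compm1 add0r.
by rewrite -j1 compA hu /t compDl -!compA rj j2 compm0 compm1 addr0.
Qed.

Lemma diag_Q (C : ConfCat) (hC : deflation_exact C)
  (X Y Z X' Y' : C)
  (i : Mor X Y) (p : Mor Y Z) (i' : Mor X' Y') (p' : Mor Y' Z)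
  (f : Mor X X') (g : Mor Y Y')
  (hrow1 : conf i p) (hrow2 : conf i' p')
  (hsq1 : mcomp g i = mcomp i' f) (hsq2 : mcomp p' g = p) :
  exists (Q : C) (q1 : Mor Q Y') (q2 : Mor Q Y) (s : Mor Y Q) (j : Mor X' Q) (r : Mor Q X'),
  [/\ deflation q1, mcomp q2 s = idm Y, mcomp q2 j = 0, mcomp r j = idm X' &
   [/\ mcomp r s = 0, mcomp j r + mcomp s q2 = idm Q & q1 = mcomp i' r + mcomp g q2]].
Proof.
have [hk1 hc1] := conf_parts hrow1.
have [hk2 hc2] := conf_parts hrow2.
have [_ [_ R2]] := hC.
have [Q [q2 [q1 [[hQ hQu] hq1]]]] := R2 _ _ _ p p' (ex_intro _ X (ex_intro _ i hrow1)).
have jm : forall E (e1 e2 : Mor E Q), mcomp q2 e1 = mcomp q2 e2 -> mcomp q1 e1 = mcomp q1 e2 -> e1 = e2.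
  move=> E e1 e2 h2 h1.
  have hh : mcomp p (mcomp q2 e1) = mcomp p' (mcomp q1 e1) by rewrite !compA hQ.
  have [w [_ hw]] := hQu E _ _ hh.
  by rewrite (hw e1) // (hw e2).
have Hs : mcomp p (idm Y) = mcomp p' g by rewrite compm1 hsq2.
have [s [[s2 s1] _]] := hQu Y _ _ Hs.
have Hj : mcomp p (0 : Mor X' Y) = mcomp p' i' by rewrite compm0 hk2.1.
have [j [[j2 j1] _]] := hQu X' _ _ Hj.
have jmono : forall E (u v : Mor E X'), mcomp j u = mcomp j v -> u = v.
  move=> E u v h; apply: (kernel_mono hk2); by rewrite -j1 -!compA h.
have [r hr] : exists r : Mor Q X', mcomp j r = idm Q - mcomp s q2.
  have h0 : mcomp p' (mcomp q1 (idm Q - mcomp s q2)) = 0.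
    by rewrite compA -hQ -compA compBr compm1 compA s2 comp1m subrr compm0.
  have [w [hw _]] := hk2.2 _ _ h0.
  exists w; apply: jm.
    by rewrite compA j2 comp0m compBr compm1 compA s2 comp1m subrr.
  by rewrite compA j1 hw.
have rj : mcomp r j = idm X'.
  apply: jmono; by rewrite compA hr compBl comp1m -compA j2 compm0 subr0 compm1.
have rs : mcomp r s = 0.
  apply: jmono; by rewrite compA hr compBl comp1m -compA s2 compm1 subrr compm0.
have q1E : q1 = mcomp i' r + mcomp g q2.
  by rewrite -j1 -s1 -!compA -compDr hr subrK compm1.
exists Q, q1, q2, s, j, r; split => //; split => //.
by rewrite hr subrK.
Qed.

Lemma part1 (C : ConfCat) (A : C -> Prop)
  (hC : deflation_exact C) (hA : adm_defl_percolating A)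
  (X Y Z X' Y' : C)
  (i : Mor X Y) (p : Mor Y Z) (i' : Mor X' Y') (p' : Mor Y' Z)
  (f : Mor X X') (g : Mor Y Y')
  (hrow1 : conf i p) (hrow2 : conf i' p')
  (hsq1 : mcomp g i = mcomp i' f) (hsq2 : mcomp p' g = p) :
  Ainv_inflation A f -> Ainv_inflation A g.
Proof.
move=> [W [h [hfh AW]]].
have [po_ex po_un] := diag_pushout hC hrow1 hrow2 hsq1 hsq2.
have [hk1 hc1] := conf_parts hrow1.
have [hk2 hc2] := conf_parts hrow2.
have [hkf hcf] := conf_parts hfh.
have [_ [R1 R2]] := hC.
have [_ [_ [_ A3]]] := hA.
have dp : deflation p by exists X, i.
have Hk : mcomp (0 : Mor Y W) i = mcomp h f by rewrite comp0m hkf.1.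
have [k [kg ki]] := po_ex W _ _ Hk.
have ii' : inflation i' by exists Z, p'.
have dh : deflation h by exists X, f.
have [P [y' [x' [[hpo hpou] hy' hx']]]] := A3 _ _ _ i' h ii' dh AW.
have Hu : mcomp k i' = mcomp (idm W) h by rewrite ki comp1m.
have [u [[uy ux] _]] := hpou W _ _ Hu.
have Hz : mcomp (mcomp y' g) i = 0 by rewrite -compA hsq1 compA hpo -compA hkf.1 compm0.
have [z [zp _]] := hc1.2 P _ Hz.
have Hv : mcomp p' i' = mcomp (0 : Mor W Z) h by rewrite comp0m hk2.1.
have [v [[vy vx] _]] := hpou Z _ _ Hv.
have vz : mcomp v z = idm Z.
  apply: (defl_epi dp); by rewrite -compA zp compA vy hsq2 comp1m.
have uz : mcomp u z = 0.
  apply: (defl_epi dp); by rewrite -compA zp compA uy kg comp0m.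
have yE : mcomp x' k + mcomp z p' = y'.
  apply: po_un.
    by rewrite compDl -!compA kg hsq2 compm0 add0r zp.
  by rewrite compDl -!compA ki hk2.1 compm0 addr0 hpo.
have sumE : mcomp x' u + mcomp z v = idm P.
  have [w [_ hw]] := hpou P _ _ hpo.
  rewrite (hw (idm P)); last by rewrite !comp1m.
  apply: hw; split.
    by rewrite compDl -!compA uy vy yE.
  by rewrite compDl -!compA ux vx compm1 compm0 addr0.
have du : deflation u.
  exact: (proj_defl hC hA ux vz uz vx sumE).
have dk : deflation k by rewrite -uy; exact: R1.
have gm0 : forall E (d : Mor E Y), mcomp g d = 0 -> d = 0.
  move=> E d hd.
  have h0 : mcomp p d = 0 by rewrite -hsq2 -compA hd compm0.
  have [w [hw _]] := hk1.2 _ _ h0.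
  have h1 : mcomp f w = mcomp f 0.
    apply: (kernel_mono hk2).
    by rewrite !compm0 compA -hsq1 -compA hw hd.
  by rewrite -hw (kernel_mono hkf h1) compm0.
have gm : forall E (u1 u2 : Mor E Y), mcomp g u1 = mcomp g u2 -> u1 = u2.
  move=> E u1 u2 h12.
  have hd : u1 - u2 = 0 by apply: gm0; rewrite compBr h12 subrr.
  by rewrite -[u1](subrK u2) hd add0r.
have kerg : is_kernel g k.
  split=> // E e0 he0.
  have [E2 [t2 [e1 [[hpb _] de1]]]] := R2 _ _ _ p (mcomp p' e0) dp.
  have h0 : mcomp p' (mcomp e0 e1 - mcomp g t2) = 0.
    by rewrite compBr !compA hsq2 hpb subrr.
  have [w [hw _]] := hk2.2 _ _ h0.
  have h1 : mcomp h w = 0.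
    by rewrite -ki -compA hw compBr !compA he0 kg !comp0m subrr.
  have [w2 [hw2 _]] := hkf.2 _ _ h1.
  have e0E : mcomp e0 e1 = mcomp g (t2 + mcomp i w2).
    by rewrite compDr compA hsq1 -compA hw2 hw addrC subrK.
  have [Kc [c hc]] := de1.
  have [hkc hcc] := conf_parts hc.
  have hv1 : mcomp (t2 + mcomp i w2) c = 0.
    apply: gm0; by rewrite compA -e0E -compA hkc.1 compm0.
  have [v0 [hv0 _]] := hcc.2 _ _ hv1.
  exists v0; split.
    apply: (defl_epi de1); by rewrite -compA hv0 e0E.
  move=> u' hu'; apply: gm; by rewrite hu'; apply: (defl_epi de1); rewrite -compA hv0 e0E.
have [Kb [b hb]] := dk.
exists W, k; split => //.
exact: conf_kernel hb kerg.
Qed.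

Lemma part2 (C : ConfCat) (A : C -> Prop)
  (hC : deflation_exact C) (hA : adm_defl_percolating A)
  (X Y Z X' Y' : C)
  (i : Mor X Y) (p : Mor Y Z) (i' : Mor X' Y') (p' : Mor Y' Z)
  (f : Mor X X') (g : Mor Y Y')
  (hrow1 : conf i p) (hrow2 : conf i' p')
  (hsq1 : mcomp g i = mcomp i' f) (hsq2 : mcomp p' g = p) :
  Ainv_deflation A f -> Ainv_deflation A g.
Proof.
move=> [K [ka [hkf AK]]].
have [po_ex po_un] := diag_pushout hC hrow1 hrow2 hsq1 hsq2.
have [hk1 hc1] := conf_parts hrow1.
have [hk2 hc2] := conf_parts hrow2.
have [hkk hck] := conf_parts hkf.
have [_ [R1 R2]] := hC.
have [_ [_ [_ A3]]] := hA.
have df : deflation f by exists K, ka.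
have gik : mcomp g (mcomp i ka) = 0 by rewrite compA hsq1 -compA hkk.1 compm0.
have ikker : is_kernel (mcomp i ka) g.
  split=> // E e0 he0.
  have h0 : mcomp p e0 = 0 by rewrite -hsq2 -compA he0 compm0.
  have [w [hw _]] := hk1.2 _ _ h0.
  have h1 : mcomp f w = 0.
    have h1' : mcomp f w = mcomp f 0.
      apply: (kernel_mono hk2). by rewrite !compm0 compA -hsq1 -compA hw he0.
    by rewrite h1' compm0.
  have [w2 [hw2 _]] := hkk.2 _ _ h1.
  exists w2; split; first by rewrite -compA hw2 hw.
  move=> u' hu'; apply: (kernel_mono hkk); apply: (kernel_mono hk1).
  by rewrite hw2 hw compA hu'.
have gcok : is_cokernel (mcomp i ka) g.
  split=> // E t ht.
  have ht' : mcomp (mcomp t i) ka = 0 by rewrite -compA ht.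
  have [w [hw _]] := hck.2 _ _ ht'.
  have hxy : mcomp t i = mcomp w f by rewrite hw.
  have [u [ug ui]] := po_ex _ _ _ hxy.
  exists u; split => // u' hu'.
  apply: po_un; first by rewrite hu' ug.
  apply: (cokernel_epi hck).
  by rewrite -!compA -!hsq1 !compA hu' ug.
have [Q [q1 [q2 [s [j [r [dq1 q2s q2j rj [rs sumQ q1E]]]]]]]] := diag_Q hC hrow1 hrow2 hsq1 hsq2.
have [M [iY [iX [pY [pX [pYY pXX pYX pXY sumM]]]]]] := has_biprod Y X.
set mu := mcomp s (pY - mcomp i pX) + mcomp j (mcomp f pX).
have q2mu : mcomp q2 mu = pY - mcomp i pX.
  by rewrite /mu compDr !compA q2s q2j comp1m !comp0m addr0.
have rmu : mcomp r mu = mcomp f pX.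
  by rewrite /mu compDr !compA rs rj comp1m !comp0m add0r.
have q1mu : mcomp q1 mu = mcomp g pY.
  by rewrite q1E compDl -!compA rmu q2mu compBr (compA g i) hsq1 -compA addrC subrK.
have muY : mcomp mu iY = s.
  by rewrite /mu compDl -!compA compBl -compA pXY pYY !compm0 subr0 addr0 compm1.
have muX : mcomp mu iX = mcomp j f - mcomp s i.
  by rewrite /mu compDl -!compA compBl -compA pXX pYX !compm1 add0r compNr addrC.
have pbmu : is_pullback f r pX mu.
  split; first by rewrite rmu.
  move=> E x y hxy.
  exists (mcomp iY (mcomp q2 y + mcomp i x) + mcomp iX x); split.
    split.
      by rewrite compDr !compA pXY pXX comp0m comp1m add0r.
    rewrite compDr !compA muY muX compBl compDr.
    rewrite -(compA s i x) -addrA [mcomp s (mcomp i x) + _]addrC subrK.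
    by rewrite -!compA hxy !compA addrC -compDl sumQ comp1m.
  move=> u' [hx hy].
  have hYu : mcomp pY u' = mcomp q2 y + mcomp i x.
    by rewrite -hy compA q2mu compBl -compA hx subrK.
  by rewrite -[u']comp1m -sumM compDl -!compA hYu hx.
have dmu : deflation mu := pullback_defl hC pbmu df.
have dD : deflation (mcomp g pY) by rewrite -q1mu; exact: R1.
have [Cc [c1 [c2 [pi1 [pi2 [p11 p22 p12 p21 sumC]]]]]] := has_biprod K X.
set x := mcomp iY (mcomp (mcomp i ka) pi1) + mcomp iX pi2.
have xc1 : mcomp x c1 = mcomp iY (mcomp i ka).
  by rewrite /x compDl -!compA p11 p21 !compm0 addr0 compm1.
have xc2 : mcomp x c2 = iX.
  by rewrite /x compDl -!compA p12 p22 !compm0 add0r compm1.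
have pYx : mcomp pY x = mcomp (mcomp i ka) pi1.
  by rewrite /x compDr !compA pYY pYX comp1m !comp0m addr0.
have pXx : mcomp pX x = pi2.
  by rewrite /x compDr !compA pXY pXX comp1m !comp0m add0r.
have kerx : is_kernel x (mcomp g pY).
  split.
    by rewrite -compA pYx compA gik comp0m.
  move=> E e0 he0.
  have he0' : mcomp g (mcomp pY e0) = 0 by rewrite compA.
  have [v [hv _]] := ikker.2 _ _ he0'.
  have xw : mcomp x (mcomp c1 v + mcomp c2 (mcomp pX e0)) = e0.
    by rewrite compDr !compA xc1 xc2 -(compA iY (mcomp i ka) v) hv !compA -compDl sumM comp1m.
  exists (mcomp c1 v + mcomp c2 (mcomp pX e0)); split => // u' hu'.
  set w := mcomp c1 v + mcomp c2 (mcomp pX e0).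
  have h1 : mcomp pi1 u' = mcomp pi1 w.
    apply: (kernel_mono ikker).
    by rewrite !compA -pYx -!compA hu' xw.
  have h2 : mcomp pi2 u' = mcomp pi2 w.
    by rewrite -pXx -!compA hu' xw.
  by rewrite -[u']comp1m -[w]comp1m -sumC !compDl -!compA h1 h2.
have [Kd [nd hnd]] := dD.
have cx : conf x (mcomp g pY) := conf_kernel hnd kerx.
have ix : inflation x by exists Y', (mcomp g pY).
have dpi1 : deflation pi1 := proj_defl hC hA p11 p22 p12 p21 sumC.
have [P0 [y' [x0 [[hpo hpou] dy' ix0]]]] := A3 _ _ _ x pi1 ix dpi1 AK.
have [th [[thy thx] _]] := hpou Y pY (mcomp i ka) pYx.
set phi := mcomp y' iY.
have yiX : mcomp y' iX = 0.
  by rewrite -xc2 compA hpo -compA p12 compm0.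
have phth : mcomp phi th = idm P0.
  have [w [_ hw]] := hpou P0 _ _ hpo.
  rewrite (hw (idm P0)); last by rewrite !comp1m.
  apply: hw; split.
    by rewrite /phi -!compA thy -[y' in RHS]compm1 -sumM compDr !compA yiX comp0m addr0.
  by rewrite /phi -!compA thx -xc1 compA hpo -compA p11 compm1.
have thph : mcomp th phi = idm Y by rewrite /phi compA thy pYY.
have [W0 [cc0 hcc0]] := ix0.
have hik : conf (mcomp i ka) (mcomp cc0 phi).
  apply: (conf_iso (u := idm K) (v := th) (w := idm W0) _ _ _ hcc0).
  - exact: iso_id.
  - by exists phi.
  - exact: iso_id.
  - by rewrite thx compm1.
  - by rewrite comp1m -compA phth compm1.
exists K, (mcomp i ka); split => //.
exact: conf_cokernel hik gcok.
Qed.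

Theorem mainTheorem11 (C : ConfCat) (A : C -> Prop)
  (hC : deflation_exact C) (hA : adm_defl_percolating A)
  (X Y Z X' Y' : C)
  (i : Mor X Y) (p : Mor Y Z) (i' : Mor X' Y') (p' : Mor Y' Z)
  (f : Mor X X') (g : Mor Y Y')
  (hrow1 : conf i p) (hrow2 : conf i' p')
  (hsq1 : mcomp g i = mcomp i' f) (hsq2 : mcomp p' g = p) :
  (Ainv_inflation A f -> Ainv_inflation A g) /\
  (Ainv_deflation A f -> Ainv_deflation A g).
Proof.
split.
- exact: (part1 hC hA hrow1 hrow2 hsq1 hsq2).
- exact: (part2 hC hA hrow1 hrow2 hsq1 hsq2).
Qed.
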